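(* The space $(\mathbb{R}^{\mathbb{Z}_<},\tau_\iota)$ is first-countable but not second-countable.
   Context: $\mathbb{R}^{\mathbb{Z}_<}$ is the set of formal series $\sum_{i\ge -k}a_i\epsilon^i$ ($k\in\mathbb{N}\cup\{0\}$, $a_i\in\mathbb{R}$), with coefficientwise addition, Cauchy-product multiplication and lexicographic order; $|\cdot|$ is the associated absolute value, $d(\mathbf{x},\mathbf{y})=|\mathbf{y}-\mathbf{x}|$, $B_{\mathbf{x}}(\mathbf{y})=\{\mathbf{z}:d(\mathbf{x},\mathbf{z})<\mathbf{y}\}$. For $m\in\mathbb{N}\cup\{0\}$ let $\Delta^m=\{a\epsilon^m: a\in\mathbb{R}\}$ (with $a\neq0$ when $m\ge1$) and $\Delta^{\downarrow m}=\bigcup_{n\ge m}\Delta^n$. A set $O$ is $\iota$-open iff for every $\mathbf{x}\in O$ there is a positive $\iota\in\Delta^{\downarrow m}$ (for some $m$) with $B_{\mathbf{x}}(\iota)\subseteq O$; $\tau_\iota$ is the topology generated by unions of such $\iota$-balls. *)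

(* Defs.v *)
From HB Require Import structures.
From mathcomp Require Import all_boot all_order all_algebra.
From mathcomp Require Import boolp classical_sets cardinality.
From mathcomp Require Import Rstruct.
From Stdlib Require Rdefinitions.
Notation R := Rdefinitions.R.

Set Implicit Arguments.
Unset Strict Implicit.
Unset Printing Implicit Defensive.

Import Order.TTheory GRing.Theory Num.Theory.
Local Open Scope classical_set_scope.
Local Open Scope ring_scope.

(** * The field R^{Z_<} of formal series  sum_{i >= -k} a_i eps^i *)

Record LS := MkLS {
  coef : int -> R ;
  coef_bounded : exists k : nat, forall i : int, i < - (k%:Z) -> coef i = 0 }.

Lemma LS_ext (x y : LS) : coef x = coef y -> x = y.
Proof.
case: x => cx px; case: y => cy py /= E; subst cy.
by rewrite (Prop_irrelevance px py).
Qed.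

Definition LS0 : LS := @MkLS (fun _ => 0) (ex_intro _ 0%N (fun _ _ => erefl)).

Lemma LSopp_subproof (x : LS) :
  exists k : nat, forall i : int, i < - (k%:Z) -> - coef x i = 0.
Proof.
case: (coef_bounded x) => k hk; exists k => i hi.
by rewrite hk // oppr0.
Qed.
Definition LSopp (x : LS) : LS := MkLS (LSopp_subproof x).

Lemma LSadd_subproof (x y : LS) :
  exists k : nat, forall i : int, i < - (k%:Z) -> coef x i + coef y i = 0.
Proof.
case: (coef_bounded x) => k hk; case: (coef_bounded y) => l hl.
exists (maxn k l) => i hi.
rewrite hk ?hl ?addr0 //; apply: (lt_le_trans hi);
  rewrite lerN2 lez_nat; [exact: leq_maxr | exact: leq_maxl].
Qed.
Definition LSadd (x y : LS) : LS := MkLS (LSadd_subproof x y).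

Definition LSsub (x y : LS) : LS := LSadd x (LSopp y).

Lemma LSmono_subproof (a : R) (m : int) :
  exists k : nat, forall i : int, i < - (k%:Z) ->
    (if i == m then a else 0) = 0.
Proof.
exists (absz m) => i hi; case: eqP => // E; subst i.
have : - ((absz m)%:Z) <= m.
  by rewrite abszE lerNl -normrN ler_norm.
by rewrite leNgt hi.
Qed.
Definition LSmono (a : R) (m : int) : LS := MkLS (LSmono_subproof a m).

Definition LSlt (x y : LS) : Prop :=
  exists j : int, coef x j < coef y j /\
    (forall i : int, i < j -> coef x i = coef y i).

Definition LSabs (x : LS) : LS := if `[< LSlt x LS0 >] then LSopp x else x.

Definition LSdist (x y : LS) : LS := LSabs (LSsub y x).

Definition LSball (x y : LS) : set LS := [set z | LSlt (LSdist x z) y].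

Definition Delta (m : nat) : set LS :=
  [set y | exists a : R, y = LSmono a (m%:Z) /\ ((0 < m)%N -> a != 0)].

Definition Delta_down (m : nat) : set LS :=
  [set y | exists n : nat, (m <= n)%N /\ Delta n y].

Definition iota_open (O : set LS) : Prop :=
  forall x, O x -> exists (m : nat) (iota : LS),
    Delta_down m iota /\ LSlt LS0 iota /\ LSball x iota `<=` O.

Definition tau_iota : set (set LS) := [set O | iota_open O].

Definition first_countable_top (T : Type) (opens : set (set T)) : Prop :=
  forall x : T, exists2 B : set (set T), countable B &
    (forall b, B b -> opens b /\ b x) /\
    (forall U, opens U -> U x -> exists2 b, B b & b `<=` U).

Definition second_countable_top (T : Type) (opens : set (set T)) : Prop :=
  exists2 B : set (set T), countable B &
    (forall b, B b -> opens b) /\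
    (forall U, opens U -> forall x, U x -> exists b, [/\ B b, b x & b `<=` U]).

(* Main.v *)
From HB Require Import structures.
Require Import Defs.
From mathcomp Require Import all_boot all_order all_algebra.
From mathcomp Require Import boolp classical_sets cardinality.
From mathcomp Require Import Rstruct.
From Stdlib Require Import Runcountable FinFun.

Set Implicit Arguments.
Unset Strict Implicit.
Unset Printing Implicit Defensive.
Import Order.TTheory GRing.Theory Num.Theory.
Local Open Scope classical_set_scope.
Local Open Scope ring_scope.

Lemma abs_coef0 (d : LS) i : (coef (LSabs d) i == 0) = (coef d i == 0).
Proof.
rewrite /LSabs; case: ifP => _ //=; by rewrite oppr_eq0.
Qed.

Lemma abs_not_neg (d : LS) : ~ LSlt (LSabs d) LS0.
Proof.
rewrite /LSabs; case: ifP => [/asboolP [j [hj ej]]|/asboolP nd] //=.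
move=> [k [hk ek]] /=.
move: hj hk ej ek => /= hj hk ej ek.
have [jk|kj|E] := ltgtP j k.
- by move: (ek _ jk) hj => /eqP; rewrite oppr_eq0 => /eqP ->; rewrite ltxx.
- by move: (ej _ kj) hk => ->; rewrite oppr0 ltxx.
- by move: hk; rewrite -E oppr_lt0 => /(lt_trans hj); rewrite ltxx.
Qed.

Definition S (n : nat) (x : LS) : set LS :=
  [set z | forall j : int, j <= n%:Z -> coef z j = coef x j].

Lemma S_open n x : iota_open (S n x).
Proof.
move=> z Sz; exists n.+1, (LSmono 1 (n.+1)%:Z); split; [|split].
- exists n.+1; split => //; exists 1; split => //; by rewrite oner_neq0.
- exists (n.+1)%:Z => /=; rewrite eqxx; split; first exact: ltr01.
  by move=> i hi; rewrite (introF eqP) // => E; move: hi; rewrite E ltxx.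
- move=> w [j' [hj ej]] j jn; rewrite -(Sz j jn).
  have H0 : forall i : int, i <= n%:Z -> coef (LSdist z w) i = 0.
    have [jn'|nj] := leP j' n%:Z.
      exfalso; apply: (@abs_not_neg (LSsub w z)); exists j'; split.
        move: hj => /=; rewrite (introF eqP) //.
        by move=> E; move: jn'; rewrite E lez_nat ltnn.
      move=> i ij; rewrite ej //= (introF eqP) //.
      by move=> E; move: ij; rewrite E => /lt_le_trans/(_ jn'); rewrite ltz_nat ltnNge leqnSn.
    move=> i hi; rewrite ej; last exact: le_lt_trans hi nj.
    rewrite /= (introF eqP) // => E; move: hi; rewrite E lez_nat ltnn //.
  move: (H0 j jn) => /eqP; rewrite abs_coef0 /= subr_eq0 => /eqP.
  done.
Qed.

Lemma S_sub_ball n x (a : R) : 0 < a -> S n x `<=` LSball x (LSmono a n%:Z).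
Proof.
move=> a0 z Sz; exists n%:Z => /=; split.
  have -> : coef (LSdist x z) n%:Z = 0.
    by apply/eqP; rewrite abs_coef0 /= Sz // subrr.
  by rewrite eqxx.
move=> i hi; rewrite (introF eqP); last by move=> E; move: hi; rewrite E ltxx.
by apply/eqP; rewrite abs_coef0 /= Sz ?subrr // ltW.
Qed.

Lemma iota_form m (iota : LS) : Delta_down m iota -> LSlt LS0 iota ->
  exists (n : nat) (a : R), iota = LSmono a n%:Z /\ 0 < a.
Proof.
move=> [n [_ [a [-> _]]]] [j [hj _]]; exists n, a; split => //.
by move: hj => /=; case: eqP => // _; rewrite ltxx.
Qed.

HB.instance Definition _ := isPointed.Build R 0.

Lemma R_not_countable : ~ countable [set: R].
Proof.
move=> cR.
have inf : infinite_set [set: R].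
  apply/infiniteP/pcard_leTP/injPex; exists (GRing.natmul 1) => // m n _ _.
  exact/Num.Theory.mulrIn/oner_neq0.
have := eq_card_nat cR inf; rewrite card_eq_sym => /card_set_bijP [f [_ finj fsurj]].
have : forall y : R, exists n : nat, f n = y.
  by move=> y; have [n _ <-] := fsurj y I; exists n.
move=> /choice [g hg].
apply: (@R_uncountable f); exists g; split.
  by move=> n; apply: finj; rewrite ?inE // hg.
exact: hg.
Qed.

Theorem mainTheorem4 :
  first_countable_top tau_iota /\ ~ second_countable_top tau_iota.
Proof.
split.
  move=> x; exists ((fun n => S n x) @` setT).
    apply: sub_countable (card_image_le _ _) _; exact: countableP.
  split.
    by move=> b [n _ <-]; split; [exact: S_open | by move=> j].
  move=> U /= /(_ x) oU Ux; have [m [iota [Di [pi sub]]]] := oU Ux.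
  have [n [a [Ei a0]]] := iota_form Di pi; subst iota.
  exists (S n x); first by exists n.
  by move=> z /(S_sub_ball a0)/sub.
move=> [B cB [Bo Bb]].
pose xr (r : R) := LSmono r 0.
have : forall r : R, exists b, [/\ B b, b (xr r) & b `<=` S 0 (xr r)].
  by move=> r; apply: Bb; [exact: S_open | move=> j].
move=> /choice [g hg].
have /countable_injP [f finj] := cB.
apply: R_not_countable; apply/countable_injP; exists (f \o g) => r s _ _ /= E.
have [Br _ _] := hg r; have [Bs _ _] := hg s.
have E' : g r = g s by apply: finj => //; rewrite inE.
have [_ xs _] := hg s; have [_ _ sr] := hg r.
rewrite -E' in xs; have := sr _ xs 0 (lexx _).
by rewrite /= => ->.
Qed.
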